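(* Let $K\ge2$ and $\lambda>0$. Let $\mathbf H=\mathbf M^*=\frac{1}{\sqrt{K-1}}(\mathbf I_K-\frac1K\mathbf J_K)\in\mathbb R^{K\times K}$ with columns $\mathbf h_1,\dots,\mathbf h_K$, and define $L(\mathbf W)=\sum_{n=1}^K-\log\bigl(\mathrm{softmax}(\mathbf W\mathbf h_n)\bigr)_n$ for $\mathbf W\in\mathbb R^{K\times K}$. Consider sign gradient descent with coupled weight decay, $\mathbf W_{t+1}=\mathbf W_t-\eta_t\,\mathrm{sign}\bigl(\nabla L(\mathbf W_t)+\lambda\mathbf W_t\bigr)$, $\mathbf W_0=\mathbf 0$, with $\mathrm{sign}$ acting entrywise, and let $\alpha_t=\langle\mathbf W_t\mathbf W_t^\top,\hat{\mathbf J}\rangle_F$ with $\hat{\mathbf J}=\frac1K\mathbf 1_K\mathbf 1_K^\top$. Then there exists a sequence of learning rates $\eta_t>0$ with $\eta_t\to0$ as $t\to\infty$ such that $\alpha_t\to0$ as $t\to\infty$.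
   Context: $\mathbf I_K$ is the identity, $\mathbf 1_K$ the all-ones vector, $\mathbf J_K=\mathbf 1_K\mathbf 1_K^\top$, $\langle \mathbf A,\mathbf B\rangle_F=\mathrm{Tr}(\mathbf A^\top\mathbf B)$, $\mathrm{softmax}(z)_k=e^{z_k}/\sum_j e^{z_j}$, $\mathrm{sign}(0)=0$. ''Coupled'' weight decay means $\lambda\mathbf W_t$ is added to the gradient inside the sign. *)

(* Defs.v *)
From HB Require Import structures.
From mathcomp Require Import all_boot all_order all_algebra.
From mathcomp Require Import all_classical all_reals all_analysis.
Set Implicit Arguments. Unset Strict Implicit. Unset Printing Implicit Defensive.
Import Order.TTheory GRing.Theory Num.Theory.
Local Open Scope ring_scope.

Section Defs.
Variable R : realType.
Variable K : nat.

Definition Jmx : 'M[R]_K := const_mx 1.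
Definition Hmx : 'M[R]_K :=
  (Num.sqrt ((K%:R : R) - 1))^-1 *: (1%:M - (K%:R)^-1 *: Jmx).
Definition hcol (n : 'I_K) : 'cV[R]_K := col n Hmx.

Definition softmax (z : 'cV[R]_K) (k : 'I_K) : R :=
  expR (z k 0) / \sum_(j < K) expR (z j 0).

Definition Lloss (W : 'M[R]_K) : R :=
  \sum_(n < K) - ln (softmax (W *m hcol n) n).

Definition gradL (W : 'M[R]_K) : 'M[R]_K :=
  \matrix_(i, j) (derive1 (fun t : R => Lloss (W + t *: delta_mx i j)) 0).

Definition sign_mx (A : 'M[R]_K) : 'M[R]_K := map_mx Num.sg A.

Fixpoint Wseq (lambda : R) (eta : nat -> R) (t : nat) : 'M[R]_K :=
  match t with
  | O => 0
  | t'.+1 => let W := Wseq lambda eta t' in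
             W - eta t' *: sign_mx (gradL W + lambda *: W)
  end.

Definition frob (A B : 'M[R]_K) : R := \tr (A^T *m B).

Definition Jhat : 'M[R]_K := (K%:R)^-1 *: Jmx.

Definition alpha (lambda : R) (eta : nat -> R) (t : nat) : R :=
  let W := Wseq lambda eta t in frob (W *m W^T) Jhat.

End Defs.

(* Main.v *)
Require Import Defs.
From HB Require Import structures.
From mathcomp Require Import all_boot all_order all_algebra.
From mathcomp Require Import all_classical all_reals all_analysis.
From mathcomp Require Import ring lra.
Import Order.TTheory GRing.Theory Num.Theory.
Import numFieldNormedType.Exports.
Local Open Scope classical_set_scope.
Local Open Scope ring_scope.
Set Implicit Arguments. Unset Strict Implicit.

Section G.
Variable R : realType.

Lemma lin_der (p q x : R) : is_derive x 1 (fun t : R => p + t * q) q.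
Proof.
have H := is_deriveD (is_derive_cst p x 1) (is_deriveZ q (is_derive_id x (1:R))).
rewrite add0r /= in H.
have -> : (fun t : R => p + t * q) = (cst p + q \*: id) by apply/funext => t /=; rewrite mulrC.
by rewrite -[X in is_derive _ _ _ X]mulr1.
Qed.

Lemma is_derive_sumf n (h : 'I_n -> R -> R) (x : R) (dh : 'I_n -> R) :
  (forall i, is_derive x 1 (h i) (dh i)) ->
  is_derive x 1 (fun t => \sum_(i<n) h i t) (\sum_(i < n) dh i).
Proof.
move=> H; have := is_derive_sum H.
have -> : (\sum_(i < n) h i) = (fun t => \sum_(i<n) h i t).
  apply/funext => t; apply: (big_rec2 (fun (F : R -> R) r => F t = r)) => // i F r _ H1; by rewrite -H1.
by [].
Qed.

Lemma exp_lin_der (p q : R) : is_derive (0:R) (1:R) (fun t : R => expR (p + t * q)) (expR p * q).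
Proof.
have H := @is_derive1_comp R expR (fun t : R => p + t * q) 0 _ _ (is_derive_expR _) (lin_der p q 0).
by move: H; rewrite mul0r addr0.
Qed.

Lemma ln_der (f : R -> R) (df : R) : 0 < f 0 -> is_derive (0:R) (1:R) f df ->
  is_derive (0:R) (1:R) (fun t => ln (f t)) ((f 0)^-1 * df).
Proof.
move=> f0 H.
have := (@is_derive1_comp R (@ln R) f 0 _ _ (is_derive1_ln f0) H). by [].
Qed.
End G.

Section G2.
Variable R : realType.
Variable K : nat.

Lemma delta_mul (i j k : 'I_K) (v : 'cV[R]_K) :
  (delta_mx i j *m v) k 0 = (k == i)%:R * v j 0.
Proof.
rewrite mxE (bigD1 j) //= big1 ?addr0; last first.
  by move=> l /negbTE hl; rewrite mxE hl andbF mul0r.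
by rewrite mxE eqxx andbT.
Qed.

Lemma Sexp_gt0 (f : 'I_K -> R) : (0 < K)%N -> 0 < \sum_(k < K) expR (f k).
Proof.
case: K f => // n f _; rewrite big_ord_recl; apply: ltr_pwDl; first exact: expR_gt0.
by apply: sumr_ge0 => k _; exact: expR_ge0.
Qed.

Lemma gradLE (W : 'M[R]_K) i j : gradL W i j =
  \sum_(n < K) (softmax (W *m hcol R n) i - (i == n)%:R) * hcol R n j 0.
Proof.
have K0 : (0 < K)%N by case: K i {W j} => [[]|].
rewrite mxE.
set z := fun n => W *m hcol R n.
set b := fun (n k : 'I_K) => (k == i)%:R * hcol R n j 0.
have -> : (fun t : R => Lloss (W + t *: delta_mx i j)) =
   (fun t => \sum_(n < K) (ln (\sum_(k < K) expR (z n k 0 + t * b n k)) - (z n n 0 + t * b n n))).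
  apply/funext => t; rewrite /Lloss; apply: eq_bigr => n _.
  have E : forall k, ((W + t *: delta_mx i j) *m hcol R n) k 0 = z n k 0 + t * b n k.
    by move=> k; rewrite mulmxDl -scalemxAl /b -delta_mul !mxE.
  rewrite /softmax E (eq_bigr (fun k => expR (z n k 0 + t * b n k))) ?ln_div ?expRK; first by rewrite opprB.
  - by rewrite posrE expR_gt0.
  - by rewrite posrE Sexp_gt0.
  - by move=> k _; rewrite E.
have D : forall n, is_derive (0:R) (1:R)
   (fun t => ln (\sum_(k < K) expR (z n k 0 + t * b n k)) - (z n n 0 + t * b n n))
   ((\sum_(k < K) expR (z n k 0))^-1 * (\sum_(k < K) expR (z n k 0) * b n k) - b n n).
  move=> n.
  have H1 := is_derive_sumf (fun k => exp_lin_der (z n k 0) (b n k)).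
  have H2 := ln_der (Sexp_gt0 (fun k => z n k 0 + 0 * b n k) K0) H1.
  have H3 := is_deriveB H2 (lin_der (z n n 0) (b n n) 0).
  move: H3 => /=; under eq_bigr do rewrite mul0r addr0.
  by [].
have := is_derive_sumf D.
move=> H; rewrite derive1E (@derive_val _ _ _ _ _ _ _ H).
apply: eq_bigr => n _; rewrite /b /softmax -/(z n).
have -> : \sum_(k < K) expR (z n k 0) * ((k == i)%:R * hcol R n j 0) = expR (z n i 0) * hcol R n j 0.
  rewrite (bigD1 i) //= big1 ?addr0; first by rewrite eqxx mul1r.
  by move=> k hk; rewrite (negbTE hk) mul0r mulr0.
rewrite eq_sym mulrBl; congr (_ - _); by rewrite mulrA (mulrC _^-1).
Qed.
End G2.

Section A.
Variable R : realType.

Lemma comp_step (X e l eta C m : R) : 0 <= l -> 0 <= eta ->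
  (l + C) * eta <= m - l * eta -> `|X| <= m -> -(C * eta) <= e <= C * eta ->
  (0 < X -> 0 <= e) -> (X < 0 -> e <= 0) ->
  `|X - l * eta * Num.sg X - e| <= m - l * eta.
Proof.
move=> hl he h1 /[dup] hXm; rewrite ler_norml => /andP[hX1 hX2] /andP[he1 he2] hp hn.
have hle : 0 <= l * eta by rewrite mulr_ge0.
rewrite ler_norml; case: (ltgtP X 0) => hX.
- rewrite (ltr0_sg hX); have ? := hn hX; apply/andP; split; nra.
- rewrite (gtr0_sg hX); have ? := hp hX; apply/andP; split; nra.
- rewrite hX sgr0; apply/andP; split; nra.
Qed.

Lemma exp_lip (y : R) : 0 <= y <= 1/2 -> expR y - 1 <= 2 * y.
Proof.
move=> /andP[h0 h1].
have A := expR_ge1Dx (- y).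
have B : expR y * expR (- y) = 1 by rewrite -expRD subrr expR0.
have C := expR_gt0 y.
nra.
Qed.

Lemma exp_lip' (y : R) : y <= 0 -> 1 - expR y <= - y.
Proof. have := expR_ge1Dx y; lra. Qed.
End A.

Section B.
Variable R : realType.
Lemma frac_bound (c k E x d P Q : R) : 0 <= d -> 0 < c -> c <= 1 -> 2%:R <= k -> 0 < E -> 1 <= x ->
  x - 1 <= 2 * (d * c) -> P = E + (k - 1) -> Q = E * x + (k - 1) ->
  0 <= c * k / P - c * k / Q <= 2 * k * d.
Proof.
move=> hd hc hc1 hk hE hx hxd hP hQ.
have hP1 : 1 <= P by rewrite hP; lra.
have hQ1 : 1 <= Q by rewrite hQ; nra.
have hP0 : P != 0 by rewrite gt_eqF //; lra.
have hQ0 : Q != 0 by rewrite gt_eqF //; lra.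
have -> : c * k / P - c * k / Q = (c * k * E * (x - 1)) / (P * Q).
  rewrite hQ hP; field. by rewrite -hP -hQ hP0 hQ0.
have hPQ : 0 < P * Q by nra.
apply/andP; split.
  apply: divr_ge0; last lra. apply: mulr_ge0; last lra. apply: mulr_ge0; last lra. apply: mulr_ge0; lra.
rewrite ler_pdivrMr //.
have hEP : E <= P by lra.
have hPPQ : P <= P * Q by nra.
have h1 : E * (x - 1) <= P * Q * (x - 1) by apply: ler_wpM2r; lra.
have h2 : c * (x - 1) <= 2 * d.
  have h3 : c * (x - 1) <= c * (2 * (d * c)) by apply: ler_wpM2l; lra.
  have h4 : c * c <= 1 by nra.
  nra.
have h5 : c * k * E * (x - 1) <= k * (P * Q) * (c * (x - 1)).
  have : E * (x - 1) * (c * k) <= P * Q * (x - 1) * (c * k) by apply: ler_wpM2r => //; nra.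
  lra.
have h6 : k * (P * Q) * (c * (x - 1)) <= k * (P * Q) * (2 * d) by apply: ler_wpM2l; nra.
nra.
Qed.
End B.

Section G3.
Variable R : realType.
Variable K : nat.
Hypothesis K2 : (2 <= K)%N.
Local Notation kk := (K%:R : R).
Local Notation c := ((Num.sqrt (kk - 1))^-1).

Lemma kk_gt1 : 1 < kk. Proof. by rewrite ltr1n. Qed.
Lemma kk_neq0 : kk != 0. Proof. by rewrite pnatr_eq0 -lt0n; case: K K2. Qed.
Lemma c_gt0 : 0 < c.
Proof. by rewrite invr_gt0 sqrtr_gt0 subr_gt0 kk_gt1. Qed.
Lemma kk_ge2 : 2%:R <= kk. Proof. by rewrite ler_nat. Qed.

Lemma c_le1 : c <= 1.
Proof.
have h : 1 <= Num.sqrt (kk - 1).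
  have h2 := kk_ge2.
  have h1 : Num.sqrt 1 <= Num.sqrt (kk - 1).
    rewrite ler_sqrt ?subr_gt0 ?kk_gt1 //; lra.
  by move: h1; rewrite sqrtr1.
by rewrite invr_le1 // ?unitf_gt0 // (lt_le_trans ltr01 h).
Qed.

Lemma hcolE (n k : 'I_K) : hcol R n k 0 = c * ((k == n)%:R - kk^-1).
Proof. by rewrite /hcol /Hmx !mxE mulr1. Qed.

Definition phi (a : R) := c * kk / (expR (a * c) + (kk - 1)).

Lemma sum_ind (f : 'I_K -> R) (n : 'I_K) : \sum_(l < K) (l == n)%:R * f l = f n.
Proof.
rewrite (bigD1 n) //= big1 ?addr0; first by rewrite eqxx mul1r.
by move=> k hk; rewrite (negbTE hk) mul0r.
Qed.

Lemma sum_ind' (f : 'I_K -> R) (n : 'I_K) : \sum_(l < K) (n == l)%:R * f l = f n.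
Proof. by rewrite -(sum_ind f n); apply: eq_bigr => l _; rewrite eq_sym. Qed.

Lemma sum_ind1 (n : 'I_K) : \sum_(l < K) (l == n)%:R = 1 :> R.
Proof. by rewrite -[RHS](sum_ind (fun _ => 1) n); apply: eq_bigr => l _; rewrite mulr1. Qed.

Lemma sum_const_K (x : R) : \sum_(l < K) x = kk * x.
Proof. by rewrite sumr_const card_ord mulr_natl. Qed.

Lemma sum_hdiff (n : 'I_K) : \sum_(l < K) ((l == n)%:R - kk^-1) = 0.
Proof.
rewrite sumrB sum_const_K mulfV ?kk_neq0 //.
have -> : \sum_(l < K) (l == n)%:R = 1 :> R.
  by rewrite -[RHS](sum_ind (fun _ => 1) n); apply: eq_bigr => l _; rewrite mulr1.
by rewrite subrr.
Qed.

Lemma Jh (n : 'I_K) : Jmx R K *m hcol R n = 0.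
Proof.
apply/matrixP => i j; rewrite !mxE.
under eq_bigr do rewrite !mxE mul1r mulr1.
by rewrite -mulr_sumr sum_hdiff mulr0.
Qed.

Lemma Z_gt0 (a : R) : 0 < expR (a * c) + (kk - 1).
Proof. have := expR_gt0 (a * c); have := kk_gt1; lra. Qed.

Lemma WIJ_h (a b : R) (n : 'I_K) : (a%:M + b *: Jmx R K) *m hcol R n = a *: hcol R n.
Proof. by rewrite mulmxDl -scalemxAl Jh scaler0 addr0 mul_scalar_mx. Qed.

Lemma softmaxIJ (a : R) (i n : 'I_K) : softmax (a *: hcol R n) i =
  (1 + (expR (a * c) - 1) * (i == n)%:R) / (expR (a * c) + (kk - 1)).
Proof.
have e : forall k : 'I_K, expR (a * (c * ((k == n)%:R - kk^-1))) =
   (1 + (expR (a * c) - 1) * (k == n)%:R) * expR (- (a * c * kk^-1)).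
  move=> k; rewrite (_ : a * (c * _) = a * c * (k == n)%:R + - (a * c * kk^-1)); last by ring.
  by rewrite expRD; case: (k == n); rewrite ?mulr1 ?mulr0 ?expR0 ?addr0 ?subrKC.
rewrite /softmax.
under eq_bigr do rewrite mxE hcolE e.
rewrite mxE hcolE e -mulr_suml big_split /= sum_const_K -mulr_sumr sum_ind1 mulr1.
have hF := expR_gt0 (- (a * c * kk^-1)).
have hZ := Z_gt0 a.
field.
apply/andP; split; first by rewrite gt_eqF.
by move: hZ; rewrite (_ : expR (a * c) + (kk - 1) = kk * 1 + (expR (a * c) - 1)) ?gt_eqF //; ring.
Qed.

Lemma gradIJ (a b : R) (i j : 'I_K) :
  gradL (a%:M + b *: Jmx R K) i j = - phi a * ((i == j)%:R - kk^-1).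
Proof.
rewrite gradLE.
under eq_bigr do rewrite WIJ_h softmaxIJ hcolE.
set E := expR (a * c); set Z := E + (kk - 1).
rewrite (@eq_bigr _ _ _ _ _ _ _ (fun n : 'I_K => c / Z * ((j == n)%:R - kk^-1) +
   c * ((E - 1) / Z - 1) * ((i == n)%:R * ((j == n)%:R - kk^-1)))); last by move=> n _; ring.
rewrite big_split /= -!mulr_sumr sum_ind'.
have -> : \sum_(l < K) ((j == l)%:R - kk^-1) = 0.
  by rewrite -[RHS](sum_hdiff j); apply: eq_bigr => l _; rewrite eq_sym.
have hZ : Z != 0 by rewrite gt_eqF // Z_gt0.
rewrite eq_sym /phi -/E -/Z; move: hZ; rewrite /Z.
move: (E) ((i == j)%:R) (Num.sqrt (kk - 1))^-1 => E' d s hZ'.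
field; by rewrite kk_neq0 hZ'.
Qed.

Definition Dval (l : R) (p : R * R) := l * (p.1 + p.2) - phi p.1 * (1 - kk^-1).
Definition Oval (l : R) (p : R * R) := l * p.2 + phi p.1 * kk^-1.

Fixpoint abseq (l : R) (eta : nat -> R) (t : nat) : R * R :=
  match t with
  | O => (0, 0)
  | t'.+1 => let p := abseq l eta t' in
     (p.1 - eta t' * (Num.sg (Dval l p) - Num.sg (Oval l p)),
      p.2 - eta t' * Num.sg (Oval l p))
  end.

Lemma Wseq_ab (l : R) (eta : nat -> R) t :
  Wseq K l eta t = (abseq l eta t).1%:M + (abseq l eta t).2 *: Jmx R K.
Proof.
elim: t => [|t IH] /=.
  by apply/matrixP => i j; rewrite !mxE mul0r; case: (i == j); rewrite /= ?addr0.
rewrite IH; move: (abseq l eta t) => [a b] /=.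
move: (gradL (a%:M + b *: Jmx R K)) (gradIJ a b) => g hg.
apply/matrixP => i j; rewrite !mxE hg /Dval /Oval /=.
case: (i == j); rewrite ?mulr1n ?mulr0n ?mulr1 ?addr0 ?add0r.
  rewrite (_ : - phi a * (1 - kk^-1) + l * (a + b) = l * (a + b) - phi a * (1 - kk^-1)); first by ring.
  by ring.
by rewrite (_ : - phi a * - kk^-1 + l * b = l * b + phi a / kk); last by ring.
Qed.

Lemma sum_ind1' (n : 'I_K) : \sum_(l < K) (n == l)%:R = 1 :> R.
Proof. by rewrite -[RHS](sum_ind1 n); apply: eq_bigr => l _; rewrite eq_sym. Qed.

Lemma mulrnb (x : R) (bb : bool) : x *+ bb = x * bb%:R.
Proof. by case: bb; rewrite ?mulr1 ?mulr0. Qed.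

Lemma WWt_entry (a b : R) (k i : 'I_K) :
  ((a%:M + b *: Jmx R K) *m (a%:M + b *: Jmx R K)^T) k i =
  a ^+ 2 * (k == i)%:R + (2 * a * b + kk * b ^+ 2).
Proof.
rewrite mxE.
under eq_bigr => l _ do rewrite !mxE ![a *+ _]mulrnb !mulr1.
rewrite (@eq_bigr _ _ _ _ _ _ _ (fun l : 'I_K => a ^+ 2 * ((k == l)%:R * (i == l)%:R) +
    (a * b * (k == l)%:R + (a * b * (i == l)%:R + b ^+ 2)))); last first.
  move=> l _. move: ((k == l)%:R) ((i == l)%:R) => x y. ring.
rewrite !big_split /= -!mulr_sumr sum_ind' !sum_ind1' sum_const_K.
rewrite (_ : (i == k) = (k == i)) 1?eq_sym //. ring.
Qed.

Lemma frob_ab (a b : R) :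
  frob ((a%:M + b *: Jmx R K) *m (a%:M + b *: Jmx R K)^T) (Jhat R K) = (a + kk * b) ^+ 2.
Proof.
have -> : (a%:M + b *: Jmx R K) *m (a%:M + b *: Jmx R K)^T =
   \matrix_(k, i) (a ^+ 2 * (k == i)%:R + (2 * a * b + kk * b ^+ 2)).
  by apply/matrixP => k i; rewrite WWt_entry [RHS]mxE.
rewrite /frob /mxtrace.
under eq_bigr do rewrite mxE.
under eq_bigr do under eq_bigr do rewrite !mxE mulr1.
under eq_bigr do rewrite -mulr_suml big_split /= -mulr_sumr sum_ind1 sum_const_K.
rewrite sum_const_K.
have := kk_neq0; move: kk => x hx; by field.
Qed.

Lemma phi_step (a d : R) : 0 <= d <= 1/2 -> 0 <= phi a - phi (a + d) <= 2 * kk * d.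
Proof.
move=> /andP[hd0 hd1].
have hc := c_gt0; have hc1 := c_le1.
have hdc : 0 <= d * c <= 1/2 by apply/andP; split; nra.
rewrite /phi mulrDl expRD.
apply: (frac_bound (x := expR (d * c)) (E := expR (a * c))) => //.
all: first [exact: kk_ge2 | exact: expR_gt0 | exact: exp_lip | (have := expR_ge1Dx (d*c); nra) | idtac].
Qed.

Lemma phi_step' (a d : R) : -(1/2) <= d <= 0 -> 0 <= phi (a + d) - phi a <= - (2 * kk * d).
Proof.
move=> /andP[hd0 hd1].
have := @phi_step (a + d) (- d); rewrite addrK => H.
have : 0 <= - d <= 1 / 2 by apply/andP; split; lra.
move/H; rewrite mulrN; lra.
Qed.

Lemma next_bounds (l eta m a b : R) : 0 < l -> 0 <= eta -> eta <= 1/4 ->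
  (l + 4 * kk) * eta <= m - l * eta ->
  `|Dval l (a, b)| <= m -> `|Oval l (a, b)| <= m ->
  let sD := Num.sg (Dval l (a, b)) in let sO := Num.sg (Oval l (a, b)) in
  `|Dval l (a - eta * (sD - sO), b - eta * sO)| <= m - l * eta /\
  `|Oval l (a - eta * (sD - sO), b - eta * sO)| <= m - l * eta.
Proof.
move=> hl he he4 hm hDm hOm sD sO.
set D := Dval l (a, b) in hDm sD *; set O := Oval l (a, b) in hOm sO *.
set Dl := - (eta * (sD - sO)).
set dl := phi (a + Dl) - phi a.
have hk := kk_ge2.
have hki : 0 < kk^-1 <= 1/2.
  have h1 : 0 < kk^-1 by rewrite invr_gt0; lra.
  have h2 : kk * kk^-1 = 1 by rewrite mulfV ?kk_neq0.
  apply/andP; split => //; nra.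
have Hp : 0 <= Dl -> -(2 * kk * Dl) <= dl <= 0.
  move=> h; have : 0 <= Dl <= 1/2. 
    apply/andP; split => //. 
    rewrite /Dl /sD /sO; case: sgrP => _; case: sgrP => _; lra.
  by move/(@phi_step a); rewrite /dl; lra.
have Hn : Dl <= 0 -> 0 <= dl <= -(2 * kk * Dl).
  move=> h; have : -(1/2) <= Dl <= 0.
    apply/andP; split => //.
    rewrite /Dl /sD /sO; case: sgrP => _; case: sgrP => _; lra.
  by move/(@phi_step' a); rewrite /dl.
have eqD : Dval l (a - eta * (sD - sO), b - eta * sO) = D - l * eta * sD - dl * (1 - kk^-1).
  by rewrite /Dval /= /D /Dval /dl /Dl /=; ring.
have eqO : Oval l (a - eta * (sD - sO), b - eta * sO) = O - l * eta * sO - (- (dl * kk^-1)).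
  by rewrite /Oval /= /O /Oval /dl /Dl /=; ring.
have hsD : -1 <= sD <= 1 by rewrite /sD; case: sgrP => _; lra.
have hsO : -1 <= sO <= 1 by rewrite /sO; case: sgrP => _; lra.
have hDl : -(2 * eta) <= Dl <= 2 * eta.
  rewrite /Dl; move: hsD hsO => /andP[? ?] /andP[? ?]; apply/andP; split; nra.
have hdl : -(4 * kk * eta) <= dl <= 4 * kk * eta.
  move: hDl => /andP[? ?].
  case: (lerP 0 Dl) => h.
    move: (Hp h) => /andP[? ?]; apply/andP; split; nra.
  move: (Hn (ltW h)) => /andP[? ?]; apply/andP; split; nra.
move: hki => /andP[hki1 hki2].
rewrite eqD eqO; split.
- apply: (comp_step (C := 4 * kk)) => //; first lra.
  + move: hdl => /andP[? ?]; apply/andP; split; nra.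
  + move=> hD; have hs : sD = 1 by rewrite /sD gtr0_sg.
    have : Dl <= 0 by rewrite /Dl hs; move: hsO => /andP[? ?]; nra.
    move/Hn => /andP[? ?]; nra.
  + move=> hD; have hs : sD = -1 by rewrite /sD ltr0_sg.
    have : 0 <= Dl by rewrite /Dl hs; move: hsO => /andP[? ?]; nra.
    move/Hp => /andP[? ?]; nra.
- apply: (comp_step (C := 4 * kk)) => //; first lra.
  + move: hdl => /andP[? ?]; apply/andP; split; nra.
  + move=> hO; have hs : sO = 1 by rewrite /sO gtr0_sg.
    have : 0 <= Dl by rewrite /Dl hs; move: hsD => /andP[? ?]; nra.
    move/Hp => /andP[? ?]; nra.
  + move=> hO; have hs : sO = -1 by rewrite /sO ltr0_sg.
    have : Dl <= 0 by rewrite /Dl hs; move: hsD => /andP[? ?]; nra.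
    move/Hn => /andP[? ?]; nra.
Qed.

Lemma phi0 : phi 0 = c.
Proof.
rewrite /phi mul0r expR0 (_ : 1 + (kk - 1) = kk); last by ring.
by rewrite mulfK // kk_neq0.
Qed.

Lemma main_aux (l : R) : 0 < l -> exists eta : nat -> R,
    (forall t, 0 < eta t) /\
    eta @ \oo --> (0 : R) /\
    alpha K l eta @ \oo --> (0 : R).
Proof.
move=> hl.
have hk := kk_ge2; have hc := c_gt0; have hc1 := c_le1.
pose C := 4 * kk. pose rho := (2 * l + C)^-1. pose q := 1 - l * rho. pose M := c.
have hC : 0 < C by rewrite /C; lra.
have hrho : 0 < rho by rewrite invr_gt0; lra.
have hrho2 : (2 * l + C) * rho = 1 by rewrite mulfV // gt_eqF //; lra.
have hq0 : 0 < q by rewrite /q; nra.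
have hq1 : q < 1 by rewrite /q; nra.
have hqt : forall t, 0 <= q ^+ t <= 1.
  by move=> t; rewrite exprn_ge0 ?exprn_ile1 //; lra.
pose eta := fun t => rho * M * q ^+ t.
exists eta.
have inv : forall t, `|Dval l (abseq l eta t)| <= M * q ^+ t /\
                     `|Oval l (abseq l eta t)| <= M * q ^+ t.
  elim => [|t [IH1 IH2]].
    rewrite /= /Dval /Oval /= phi0 expr0 mulr1 !addr0 !mulr0 !add0r normrN.
    have h1 : 0 < kk^-1 by rewrite invr_gt0; lra.
    have h2 : kk * kk^-1 = 1 by rewrite mulfV ?kk_neq0.
    rewrite !ger0_norm; [split; rewrite /M; nra| nra | nra].
  rewrite /=; move: (abseq l eta t) IH1 IH2 => [a b] /= IH1 IH2.
  have e0 : 0 <= eta t.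
    rewrite /eta /M; apply: mulr_ge0; last exact: exprn_ge0 (ltW hq0).
    by apply: mulr_ge0; exact: ltW.
  have e1 : eta t <= 1/4.
    rewrite /eta /M; move: (hqt t) => /andP[? ?].
    have h8 : rho <= 1/8 by rewrite /C in hrho2; nra.
    have h9 : rho * c <= 1/8 by nra.
    have h10 : rho * c * q ^+ t <= rho * c by rewrite ler_piMr //; nra.
    lra.
  have e2 : (l + 4 * kk) * eta t <= M * q ^+ t - l * eta t.
    rewrite /eta; move: (hqt t) => /andP[? ?].
    have -> : (l + 4 * kk) * (rho * M * q ^+ t) = M * q ^+ t - l * (rho * M * q ^+ t).
      have -> : M * q ^+ t = (2 * l + C) * rho * (M * q ^+ t) by rewrite hrho2 mul1r.
      rewrite /C; ring.
    by [].
  have [A B] := next_bounds hl e0 e1 e2 IH1 IH2.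
  have E : M * q ^+ t - l * eta t = M * q ^+ t.+1 by rewrite /eta exprS /q; ring.
  by rewrite -E; split.
split.
  move=> t; rewrite /eta /M; apply: mulr_gt0; [exact: mulr_gt0|exact: exprn_gt0].
split.
  have -> : eta = geometric (rho * M) q by apply/funext => t.
  by apply: cvg_geometric; rewrite gtr0_norm.
have ha : forall t, alpha K l eta t = ((abseq l eta t).1 + kk * (abseq l eta t).2) ^+ 2.
  by move=> t; rewrite /alpha Wseq_ab frob_ab.
have hb : forall t, 0 <= alpha K l eta t <= (kk * M / l) ^+ 2 * (q ^+ 2) ^+ t.
  move=> t; rewrite ha; have [A B] := inv t.
  move: (abseq l eta t) A B => [a b] /= A B.
  set y := kk * M / l * q ^+ t.
  have hy : l * y = kk * (M * q ^+ t) by rewrite /y mulrA (mulrC l) -!mulrA mulKf ?gt_eqF // mulrA.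
  have hx : l * (a + kk * b) = Dval l (a, b) + (kk - 1) * Oval l (a, b).
    rewrite /Dval /Oval /=; field; exact: kk_neq0.
  move: A B; rewrite !ler_norml => /andP[A1 A2] /andP[B1 B2].
  have X1 : l * (a + kk * b) <= l * y by rewrite hx hy; nra.
  have X2 : l * (- y) <= l * (a + kk * b) by rewrite hx mulrN hy; nra.
  rewrite !ler_pM2l // in X1 X2.
  rewrite -exprM mulnC exprM -exprMn -/y.
  apply/andP; split; first exact: sqr_ge0.
  nra.
have hq2 : `|q ^+ 2| < 1 by rewrite gtr0_norm ?exprn_gt0 //; nra.
have G := cvg_geometric ((kk * M / l) ^+ 2) hq2.
have Z : (cst (0 : R) : nat -> R) @ \oo --> (0 : R) by exact: cvg_cst.
apply: (squeeze_cvgr _ Z G).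
by apply: nearW => t; exact: hb.
Qed.
End G3.

Unset Implicit Arguments.

Theorem mainTheorem5 (R : realType) (K : nat) (lambda : R) :
  (2 <= K)%N -> 0 < lambda ->
  exists eta : nat -> R,
    (forall t, 0 < eta t) /\
    eta @ \oo --> (0 : R) /\
    alpha K lambda eta @ \oo --> (0 : R).
Proof.
move=> K2 hl; exact: (main_aux K2 hl).
Qed.
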